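(* Let $X$ be a closed subset of $\mathbb{R}^n$ and let $q\ge p$ be nonnegative integers. Then $\tau^q(X)_p$ is a closed subbundle of $X\times\mathcal{P}_p^*$.
   Context: Notation. $\mathcal{P}_k$ is the space of real polynomials on $\mathbb{R}^n$ of degree $\le k$, $\mathcal{P}_k^*$ its dual, $r_k=\dim\mathcal{P}_k$. For $\xi\in\mathcal{P}_k^*$, $b\in\mathbb{R}^n$, $|\alpha|\le k$: $\xi_\alpha(b):=\xi(\tfrac1{\alpha!}(x-b)^\alpha)$; $\delta_a(P)=P(a)$. A bundle over $X$ with fibres in $W$ is a subset of $X\times W$ whose fibres are linear subspaces. Paratangent bundle of order $k$: for a bundle $E\subset X\times\mathcal{P}_k^*$, $\Delta E=\{(a,b,\xi+\eta):a,b\in X,\xi\in E_a,\eta\in E_b,|a-b|^{k-|\alpha|}|\eta_\alpha(b)|\le1\ \forall|\alpha|\le k\}$, $E'=\{(a,\xi):(a,a,\xi)\in\overline{\Delta E}\}$ (closure in $X\times X\times\mathcal{P}_k^*$), $\rho(E)=\{(a,\xi):\xi\in\operatorname{Span}E'_a\}$; with $E_0=\{(a,\lambda\delta_a):a\in X,\lambda\in\mathbb{R}\}$, $\rho^i(E_0)$ is constant for $i\ge2r_k$ and $\tau^k(X):=\rho^{2r_k}(E_0)$, with fibres $\tau^k_a(X)$. For $a\in\mathbb{R}^n$ let $\pi_a:\mathcal{P}_q\to\mathcal{P}_p$ send $\sum_{|\beta|\le q}c_\beta(x-a)^\beta$ to $\sum_{|\beta|\le p}c_\beta(x-a)^\beta$,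 and let $\iota_a:\mathcal{P}_p^*\to\mathcal{P}_q^*$, $\iota_a(\xi)=\xi\circ\pi_a$ (an injection whose image is the annihilator of $\{P\in\mathcal{P}_q:D^\alpha P(a)=0,\ |\alpha|\le p\}$). $\tau^q(X)_p$ is the bundle over $X$ with fibres $\tau^q_a(X)_p:=\iota_a^{-1}(\tau^q_a(X))\subset\mathcal{P}_p^*$. *)

(* Defs.v *)
From HB Require Import structures.
From mathcomp Require Import all_boot all_order all_algebra.
From mathcomp Require Import reals.
From mathcomp Require Import mpoly.
Set Implicit Arguments. Unset Strict Implicit. Unset Printing Implicit Defensive.
Import Order.TTheory GRing.Theory Num.Theory.
Local Open Scope ring_scope.

Section ParaTangent.
Variables (R : realType) (n : nat).

Definition pt := 'I_n -> R.

(* multi-indices alpha with |alpha| <= k : the monomials x^alpha spanning P_k *)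
Definition midx (k : nat) := 'X_{1..n < k.+1}.

(* P_k^* : a linear functional xi on P_k is encoded by its values xi(x^alpha)
   on the monomial basis {x^alpha : |alpha| <= k}. *)
Definition dual (k : nat) := midx k -> R.

Definition dapp k (xi : dual k) (P : {mpoly R[n]}) : R :=
  \sum_(m : midx k) P@_(val m) * xi m.

Definition mfact (al : 'X_{1..n}) : R := (\prod_(i < n) (al i)`!)%:R.

Definition xshift (b : pt) (al : 'X_{1..n}) : {mpoly R[n]} :=
  \prod_(i < n) ('X_i - (b i)%:MP) ^+ (al i).

Definition xi_alpha k (xi : dual k) (al : midx k) (b : pt) : R :=
  dapp xi ((mfact (val al))^-1 *: xshift b (val al)).

Definition delta k (a : pt) : dual k := fun m => ('X_[val m] : {mpoly R[n]}).@[a].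

Definition enorm (v : pt) : R := Num.sqrt (\sum_(i < n) v i ^+ 2).

Definition bundle k := pt -> dual k -> Prop.

Definition DeltaE (X : pt -> Prop) k (E : bundle k) (a b : pt) (z : dual k) :=
  exists xi eta : dual k,
    [/\ X a /\ X b, E a xi, E b eta, z = (fun m => xi m + eta m) &
      forall al : midx k,
        enorm (fun i => a i - b i) ^+ (k - mdeg (val al)) *
          `|xi_alpha eta al b| <= 1].

(* closure in X x X x P_k^* (product topology, coordinatewise) *)
Definition closure3 (X : pt -> Prop) k (S : pt -> pt -> dual k -> Prop)
    (a b : pt) (z : dual k) :=
  [/\ X a, X b &
    forall e : R, 0 < e -> exists a' b' z',
      [/\ S a' b' z', forall i, `|a i - a' i| < e,
          forall i, `|b i - b' i| < e & forall m, `|z m - z' m| < e]].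

Definition Eprime (X : pt -> Prop) k (E : bundle k) : bundle k :=
  fun a z => closure3 X (DeltaE X E) a a z.

Inductive in_span k (S : dual k -> Prop) : dual k -> Prop :=
| span0 : in_span S (fun _ => 0)
| spanS : forall (c : R) (eta xi : dual k),
    S eta -> in_span S xi -> in_span S (fun m => c * eta m + xi m).

Definition rho (X : pt -> Prop) k (E : bundle k) : bundle k :=
  fun a z => X a /\ in_span (Eprime X E a) z.

Definition E0 (X : pt -> Prop) k : bundle k :=
  fun a z => X a /\ exists lam : R, z = (fun m => lam * @delta k a m).

Definition rdim k : nat := #|{: midx k}|.

Definition tau (X : pt -> Prop) k : bundle k :=
  iter (2 * rdim k) (@rho X k) (@E0 X k).

(* pi_a : P_q -> P_p : write P = sum c_beta (x-a)^beta (i.e. Q := P(x+a) =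
   sum c_beta x^beta), keep |beta| <= p, and substitute back x -> x - a. *)
Definition pi_a (p : nat) (a : pt) (P : {mpoly R[n]}) : {mpoly R[n]} :=
  let Q := P \mPo [tuple ('X_i + (a i)%:MP) | i < n] in
  (\sum_(m : midx p) Q@_(val m) *: 'X_[val m])
    \mPo [tuple ('X_i - (a i)%:MP) | i < n].

Definition iota_a (p q : nat) (a : pt) (xi : dual p) : dual q :=
  fun m => dapp xi (pi_a p a 'X_[val m]).

Definition tau_p (X : pt -> Prop) (p q : nat) : bundle p :=
  fun a xi => X a /\ @tau X q a (@iota_a p q a xi).

Definition closed_set (X : pt -> Prop) :=
  forall a : pt, (forall e : R, 0 < e -> exists a', X a' /\ forall i, `|a i - a' i| < e) ->
    X a.

Definition lin_subspace k (S : dual k -> Prop) :=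
  [/\ S (fun _ => 0),
      forall xi eta, S xi -> S eta -> S (fun m => xi m + eta m) &
      forall (c : R) xi, S xi -> S (fun m => c * xi m)].

Definition closed_subbundle (X : pt -> Prop) k (T : bundle k) :=
  [/\ forall a xi, T a xi -> X a,
      forall a, X a -> lin_subspace (T a) &
      forall a xi, X a ->
        (forall e : R, 0 < e -> exists a' xi',
           [/\ T a' xi', forall i, `|a i - a' i| < e & forall m, `|xi m - xi' m| < e]) ->
        T a xi].

End ParaTangent.

(* Main.v *)
Require Import Defs.
From HB Require Import structures.
From mathcomp Require Import all_boot all_order all_algebra.
From mathcomp Require Import reals.
From mathcomp Require Import mpoly.
From mathcomp Require Import classical_sets.
From Stdlib Require Import Classical FunctionalExtensionality.
From mathcomp Require Import zify ring lra.
Set Implicit Arguments. Unset Strict Implicit. Unset Printing Implicit Defensive.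
Import Order.TTheory GRing.Theory Num.Theory.
Local Open Scope ring_scope.

Section P1.
Context (R : realType) (n : nat) (X : pt R n -> Prop) (k : nat).

Definition lin_bundle (E : bundle R n k) :=
  (forall a z, E a z -> X a) /\ (forall a, X a -> lin_subspace (E a)).

Lemma in_span_add (S : dual R n k -> Prop) x y :
  in_span S x -> in_span S y -> in_span S (fun m => x m + y m).
Proof.
elim=> [|c eta xi Seta _ IH] Hy.
  by have -> : (fun m => 0 + y m) = y by apply: functional_extensionality=> m; rewrite add0r.
have -> : (fun m => c * eta m + xi m + y m) = (fun m => c * eta m + (xi m + y m)).
  by apply: functional_extensionality=> m; rewrite addrA.
exact: (spanS c Seta (IH Hy)).
Qed.

Lemma in_span_scale (S : dual R n k -> Prop) c x :
  in_span S x -> in_span S (fun m => c * x m).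
Proof.
elim=> [|d eta xi Seta _ IH].
  have -> : (fun m : midx n k => c * 0) = (fun _ => 0) by apply: functional_extensionality=> m; rewrite mulr0.
  exact: span0.
have -> : (fun m => c * (d * eta m + xi m)) = (fun m => (c * d) * eta m + c * xi m).
  by apply: functional_extensionality=> m; rewrite mulrDr mulrA.
exact: (spanS (c * d) Seta IH).
Qed.

Lemma in_span_lin (S : dual R n k -> Prop) : lin_subspace (in_span S).
Proof.
split; [exact: span0 | by move=> *; apply: in_span_add | by move=> *; apply: in_span_scale].
Qed.

Lemma in_span_in (S : dual R n k -> Prop) z : S z -> in_span S z.
Proof.
move=> Sz.
have -> : z = (fun m => 1 * z m + (fun _ => 0) m) by apply: functional_extensionality=> m; rewrite mul1r addr0.
apply: spanS => //; exact: span0.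
Qed.

Lemma rho_lin (E : bundle R n k) : lin_bundle (rho X E).
Proof. split; first by move=> a z []. by move=> a Xa; split; [split=> //; exact: span0 | move=> ?? [_ ?] [_ ?]; split=> //; apply: in_span_add | move=> ?? [_ ?]; split=> //; apply: in_span_scale]. Qed.

Lemma E0_lin : lin_bundle (E0 X (k:=k)).
Proof.
split; first by move=> a z [].
move=> a Xa; split.
- split=> //; exists 0; apply: functional_extensionality=> m; by rewrite mul0r.
- move=> x y [_ [l1 ->]] [_ [l2 ->]]; split=> //; exists (l1 + l2).
  by apply: functional_extensionality=> m; rewrite mulrDl.
- move=> c x [_ [l ->]]; split=> //; exists (c * l).
  by apply: functional_extensionality=> m; rewrite mulrA.
Qed.

Lemma xi_alpha0 al (b : pt R n) : xi_alpha (fun _ : midx n k => 0 : R) al b = 0.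
Proof. by rewrite /xi_alpha /dapp big1 // => m _; rewrite mulr0. Qed.

Lemma DeltaE_diag (E : bundle R n k) a z :
  lin_bundle E -> E a z -> DeltaE X E a a z.
Proof.
move=> [EX Elin] Eaz; have Xa := EX _ _ Eaz.
exists z, (fun _ => 0); split=> //.
- by case: (Elin a Xa).
- by apply: functional_extensionality=> m; rewrite addr0.
- by move=> al; rewrite xi_alpha0 normr0 mulr0.
Qed.

Lemma closure_sub_rho (E : bundle R n k) a z :
  lin_bundle E -> X a ->
  (forall e : R, 0 < e -> exists a' z', [/\ E a' z', forall i, `|a i - a' i| < e & forall m, `|z m - z' m| < e]) ->
  rho X E a z.
Proof.
move=> HE Xa H; split=> //; apply: in_span_in.
split=> // e e0; have [a' [z' [Ez ha hz]]] := H e e0.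
exists a', a', z'; split=> //; exact: DeltaE_diag.
Qed.

Lemma sub_rho (E : bundle R n k) a z : lin_bundle E -> E a z -> rho X E a z.
Proof.
move=> HE Eaz; apply: closure_sub_rho => //; first exact: HE.1 Eaz.
by move=> e e0; exists a, z; split=> // i; rewrite subrr normr0.
Qed.

Lemma rho_mono (E F : bundle R n k) :
  (forall a z, E a z -> F a z) -> forall a z, rho X E a z -> rho X F a z.
Proof.
move=> EF a z [Xa Hs]; split=> //.
elim: Hs => [|c eta xi Heta _ IH]; first exact: span0.
apply: (spanS c _ IH).
case: Heta => Xa' Xa'' Hc; split=> // e e0.
have [a1 [b1 [z1 [[xi1 [eta1 [HX Ex Ee Hz Hb]]] h1 h2 h3]]]] := Hc e e0.
exists a1, b1, z1; split=> //; exists xi1, eta1; split; by auto.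
Qed.

Lemma rho_local (E F : bundle R n k) a (eps : R) : 0 < eps ->
  (forall b, X b -> (forall i, `|a i - b i| < eps) -> forall z, E b z -> F b z) ->
  forall z, rho X E a z -> rho X F a z.
Proof.
move=> eps0 EF z [Xa Hs]; split=> //.
elim: Hs => [|c eta xi Heta _ IH]; first exact: span0.
apply: (spanS c _ IH).
case: Heta => Xa' Xa'' Hc; split=> // e e0.
have e10 : 0 < Num.min e eps by rewrite lt_min e0 eps0.
have [a1 [b1 [z1 [[xi1 [eta1 [[HXa HXb] Ex Ee Hz Hb]]] h1 h2 h3]]]] := Hc _ e10.
have m1 : Num.min e eps <= eps by rewrite ge_min lexx orbT.
have m2 : Num.min e eps <= e by rewrite ge_min lexx.
exists a1, b1, z1; split.
- exists xi1, eta1; split=> //.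
  + by apply: EF => // i; exact: (lt_le_trans (h1 i) m1).
  + by apply: EF => // i; exact: (lt_le_trans (h2 i) m1).
- move=> i; exact: (lt_le_trans (h1 i) m2).
- move=> i; exact: (lt_le_trans (h2 i) m2).
- move=> m; exact: (lt_le_trans (h3 m) m2).
Qed.

Definition Ei (i : nat) : bundle R n k := iter i (@rho R n X k) (@E0 R n X k).

Lemma Ei_lin i : lin_bundle (Ei i).
Proof. case: i => [|i]; [exact: E0_lin | exact: rho_lin]. Qed.

Lemma Ei_S i : Ei i.+1 = rho X (Ei i).
Proof. by []. Qed.

Lemma Ei_incr i a z : Ei i a z -> Ei i.+1 a z.
Proof. by move=> H; rewrite Ei_S; apply: sub_rho => //; apply: Ei_lin. Qed.

End P1.

Section P2.
Context (R : realType) (n k : nat).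
Local Notation N := (rdim n k).
Local Notation dualk := (dual R n k).

Definition toRow (z : dualk) : 'rV[R]_N := \row_(i < N) z (enum_val i).
Definition fromRow (v : 'rV[R]_N) : dualk := fun m => v 0 (enum_rank m).

Lemma fromRowK z : fromRow (toRow z) = z.
Proof. by apply: functional_extensionality=> m; rewrite /fromRow mxE enum_rankK. Qed.

Lemma toRowK v : toRow (fromRow v) = v.
Proof. by apply/rowP=> i; rewrite mxE /fromRow enum_valK. Qed.

Lemma fromRow0 : fromRow 0 = (fun _ => 0).
Proof. by apply: functional_extensionality=> m; rewrite /fromRow mxE. Qed.

Lemma fromRowD u v : fromRow (u + v) = (fun m => fromRow u m + fromRow v m).
Proof. by apply: functional_extensionality=> m; rewrite /fromRow mxE. Qed.

Lemma fromRowZ c u : fromRow (c *: u) = (fun m => c * fromRow u m).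
Proof. by apply: functional_extensionality=> m; rewrite /fromRow mxE. Qed.

Lemma lin_submx (S : dualk -> Prop) c (M : 'M[R]_(c, N)) :
  lin_subspace S -> (forall i, S (fromRow (row i M))) ->
  forall v, (v <= M)%MS -> S (fromRow v).
Proof.
move=> [S0 SD SZ] HM v /submxP [u ->].
rewrite mulmx_sum_row.
apply: (big_ind (fun w => S (fromRow w))).
- by rewrite fromRow0.
- by move=> x y Sx Sy; rewrite fromRowD; apply: SD.
- by move=> i _; rewrite fromRowZ; apply: SZ.
Qed.

Definition indep (S : dualk -> Prop) c :=
  exists M : 'M[R]_(c, N), row_free M /\ forall i, S (fromRow (row i M)).

Definition indep_ge (S : dualk -> Prop) c := exists c', (c <= c')%N /\ indep S c'.

Lemma row_rV (A : 'rV[R]_N) (j : 'I_1) : row j A = A.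
Proof. by apply/rowP=> t; rewrite mxE ord1. Qed.

Lemma indep_grow (T : dualk -> Prop) c (M : 'M[R]_(c, N)) z :
  row_free M -> (forall i, T (fromRow (row i M))) -> T z ->
  ~~ (toRow z <= M)%MS -> indep T c.+1.
Proof.
move=> fM TM Tz zM.
exists (col_mx (toRow z) M); split.
- have z0 : toRow z != 0 by apply: contra zM => /eqP ->; exact: sub0mx.
  rewrite /row_free -(addsmxE (toRow z) M).1.
  have := mxrank_sum_cap (toRow z) M.
  rewrite rank_rV z0 (eqP fM).
  have -> : \rank (toRow z :&: M)%MS = 0%N.
    apply/eqP; rewrite mxrank_eq0 -submx0; apply: contraR zM => H.
    have r1 : \rank (toRow z :&: M)%MS = 1%N.
      apply/eqP; rewrite eqn_leq; rewrite lt0n mxrank_eq0 -submx0 H andbT.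
      by rewrite (leq_trans (mxrankS (capmxSl _ _))) // rank_rV z0.
    have : (toRow z <= toRow z :&: M)%MS.
      by rewrite -(mxrank_leqif_sup (capmxSl _ _)) r1 rank_rV z0.
    by move/submx_trans; apply; exact: capmxSr.
  by rewrite addn0 => ->.
- move=> i; have -> : i = @unsplit 1 c (@split 1 c i) :> 'I_(1 + c) by rewrite splitK.
  case: (@split 1 c i) => j /=.
  + by have := @rowKu _ 1 c N j (toRow z) M => /= ->; rewrite row_rV fromRowK.
  + by have := @rowKd _ 1 c N j (toRow z) M => /= ->.
Qed.

Lemma indep_bound (S : dualk -> Prop) c : indep S c -> (c <= N)%N.
Proof. by case=> M [fM _]; rewrite -(eqP fM) rank_leq_col. Qed.

Lemma max_family (W : dualk -> Prop) : lin_subspace W ->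
  exists d (B : 'M[R]_(d, N)), [/\ row_free B, forall i, W (fromRow (row i B)) &
     forall z, W z -> (toRow z <= B)%MS].
Proof.
move=> Wl.
suff H : forall m d, (N - d <= m)%N -> indep W d -> exists d (B : 'M[R]_(d, N)), [/\ row_free B, forall i, W (fromRow (row i B)) &
     forall z, W z -> (toRow z <= B)%MS].
  apply: (H N 0%N); first by rewrite subn0.
  exists 0; split; last by case.
  by rewrite /row_free; apply/eqP/eqP; rewrite -leqn0 rank_leq_row.
elim=> [|m IH] d Hd [M [fM WM]].
- exists d, M; split=> // z Wz; apply: contraT => nz.
  have := indep_bound (indep_grow fM WM Wz nz); rewrite ltnNge.
  by move: Hd; rewrite leqn0 subn_eq0 => ->.
- case: (classic (exists z, W z /\ ~~ (toRow z <= M)%MS)) => [[z [Wz nz]]|Hn].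
  + apply: (IH d.+1); first by lia.
    exact: indep_grow fM WM Wz nz.
  + exists d, M; split=> // z Wz; apply: contraT => nz.
    by case: Hn; exists z.
Qed.

End P2.

Section P3.
Context (R : realType).

Lemma cluster1 (B : R -> R -> Prop) :
  (forall e e' x, 0 < e -> e <= e' -> B e x -> B e' x) ->
  (forall e, 0 < e -> exists x, B e x) ->
  (forall e x, B e x -> `|x| <= 1) ->
  exists xs, forall e, 0 < e -> exists x, B e x /\ `|xs - x| < e.
Proof.
move=> Bmon Bne Bb.
pose S := fun x : R => forall e, 0 < e -> exists y, B e y /\ x <= y.
have hS : has_sup S.
  split.
  - exists (-1) => e e0; have [y By] := Bne e e0; exists y; split=> //.
    by have := Bb _ _ By; rewrite ler_norml => /andP [h _].
  - exists 1%R; move=> x Sx; have [y [By xy]] := Sx 1 ltr01.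
    by apply: (le_trans xy); have := Bb _ _ By; rewrite ler_norml => /andP [_ h].
exists (sup S) => e e0.
have [x Sx hx] := sup_adherent e0 hS.
have nS : ~ S (sup S + e).
  move=> H; have := sup_upper_bound hS H.
  by rewrite gerDl leNgt e0.
have [e1 [e10 He1]] : exists e1, 0 < e1 /\ forall y, B e1 y -> y < sup S + e.
  apply: NNPP => Hn; apply: nS => e' e'0.
  apply: NNPP => Hy; apply: Hn; exists e'; split=> // y By.
  rewrite ltNge; apply/negP => hy; apply: Hy; by exists y.
have e20 : 0 < Num.min e e1 by rewrite lt_min e0 e10.
have [y [By xy]] := Sx _ e20.
exists y; split.
  by apply: (Bmon _ _ _ e20 _ By); rewrite ge_min lexx.
have y1 : y < sup S + e by apply: He1; apply: (Bmon _ _ _ e20 _ By); rewrite ge_min lexx orbT.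
rewrite ltr_norml; apply/andP; split.
- lra.
- lra.
Qed.

Lemma cluster (T : finType) (A : R -> (T -> R) -> Prop) :
  (forall e e' v, 0 < e -> e <= e' -> A e v -> A e' v) ->
  (forall e, 0 < e -> exists v, A e v) ->
  (forall e v, A e v -> forall t, `|v t| <= 1) ->
  exists vs : T -> R, forall e, 0 < e -> exists v, A e v /\ forall t, `|vs t - v t| < e.
Proof.
move=> Amon Ane Ab.
suff H : forall s : seq T, exists vs : T -> R, forall e, 0 < e -> exists v, A e v /\ forall t, t \in s -> `|vs t - v t| < e.
  have [vs Hvs] := H (enum T); exists vs => e e0.
  have [v [Av Hv]] := Hvs e e0; exists v; split=> // t; apply: Hv; by rewrite mem_enum.
elim=> [|t0 s [vs IH]].
  exists (fun _ => 0) => e e0; have [v Av] := Ane e e0; by exists v.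
pose B := fun e x => exists v, (A e v /\ forall t, t \in s -> `|vs t - v t| < e) /\ v t0 = x.
have [xs Hxs] : exists xs, forall e, 0 < e -> exists x, B e x /\ `|xs - x| < e.
  apply: cluster1.
  - move=> e e' x e0 ee' [v [[Av Hv] <-]]; exists v; split=> //; split.
      exact: Amon Av.
    by move=> t ts; apply: lt_le_trans ee'; apply: Hv.
  - by move=> e e0; have [v Hv] := IH e e0; exists (v t0), v.
  - by move=> e x [v [[Av _] <-]]; apply: Ab Av t0.
exists (fun t => if t == t0 then xs else vs t) => e e0.
have [x [[v [[Av Hv] vx]] hx]] := Hxs e e0.
exists v; split=> // t; rewrite in_cons; case: eqP => [->|_] /=.
  by rewrite vx.
exact: Hv.
Qed.

End P3.

Section P4.
Context (R : realType).

Lemma argmax_ex (T : finType) (t0 : T) (f : T -> R) : exists t, forall t', f t' <= f t.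
Proof.
case: (@arg_maxP _ R T t0 xpredT f isT) => t _ H; exists t => t'; exact: H.
Qed.

Lemma small_le0 (x kap : R) : 0 <= kap -> (forall e, 0 < e -> x <= e * kap) -> x <= 0.
Proof.
move=> k0 H; rewrite leNgt; apply/negP => x0.
have e0 : 0 < x / (kap + 1) by rewrite divr_gt0 // ltr_pwDr.
have := H _ e0; rewrite mulrAC ler_pdivlMr ?ltr_pwDr //.
rewrite mulrDr mulr1 => h; nra.
Qed.

Lemma lin_closed (T : finType) (vs : T -> R) (K : T -> R) :
  (forall e, 0 < e -> exists v : T -> R, (\sum_t v t * K t = 0) /\ forall t, `|vs t - v t| < e) ->
  \sum_t vs t * K t = 0.
Proof.
move=> H; apply/eqP; rewrite -normr_le0.
apply: (@small_le0 _ (\sum_t `|K t|)); first by apply: sumr_ge0 => t _.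
move=> e e0; have [v [v0 hv]] := H e e0.
have -> : \sum_t vs t * K t = \sum_t (vs t - v t) * K t + \sum_t v t * K t.
  by rewrite -big_split; apply: eq_bigr => t _ /=; rewrite mulrBl subrK.
rewrite v0 addr0.
apply: (le_trans (ler_norm_sum _ _ _)); rewrite mulr_sumr; apply: ler_sum => t _.
by rewrite normrM ler_wpM2r // ltW.
Qed.


Lemma rowfun_mul (N m : nat) (v : 'I_N -> R) (K : 'M[R]_(N, m)) j :
  ((\row_t v t) *m K) 0 j = \sum_t v t * K t j.
Proof. by rewrite mxE; apply: eq_bigr => t _; rewrite mxE. Qed.

Section LemmaL.
Context (n : nat) (X : pt R n -> Prop) (k : nat).
Local Notation N := (rdim n k).
Local Notation E j := (@Ei R n X k j).

Lemma lemmaL j a c : X a ->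
  (forall e, 0 < e -> exists b, [/\ X b, forall i, `|a i - b i| < e & indep_ge (E j b) c]) ->
  indep_ge (E j.+1 a) c.
Proof.
move=> Xa Hn.
have Fl := (Ei_lin X k j.+1).2 a Xa.
have [d [B [fB FB spB]]] := max_family Fl.
case: (leqP c d) => [cd | dc]; first by exists d; split=> //; exists B.
exfalso.
pose C := (B^C)%MS.
pose A := fun e (v : 'I_N -> R) => [/\ forall t, `|v t| <= 1, exists t, `|v t| = 1, ((\row_t v t) <= C)%MS &
   exists b, [/\ X b, forall i, `|a i - b i| < e & E j b (fromRow (\row_t v t))]].
have [vs Hvs] : exists vs : 'I_N -> R, forall e, 0 < e -> exists v, A e v /\ forall t, `|vs t - v t| < e.
apply: (@cluster R 'I_N A).
- move=> e e' v e0 ee' [h1 h2 h3 [b [Xb hb Eb]]]; split=> //; exists b; split=> // i.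
  exact: lt_le_trans (hb i) ee'.
- move=> e e0; have [b [Xb hb [c' [cc' [M [fM EM]]]]]] := Hn e e0.
  pose Y := (M :&: C)%MS.
  have rY : (0 < \rank Y)%N.
    have := mxrank_sum_cap M C; rewrite (eqP fM) mxrank_compl (eqP fB).
    have := rank_leq_col (M + C)%MS.
    have := rank_leq_col B; rewrite (eqP fB).
    rewrite -/Y; lia.
  have [i0 Hi0] : exists i, row i Y != 0.
    apply: NNPP => H; move: rY; rewrite lt0n mxrank_eq0; apply/negP; rewrite negbK.
    apply/eqP/row_matrixP => i; rewrite row0; apply: NNPP => hi; apply: H; exists i; exact/eqP.
  set v0 := row i0 Y.
  have v0M : (v0 <= M)%MS := submx_trans (row_sub i0 Y) (capmxSl M C).
  have v0C : (v0 <= C)%MS := submx_trans (row_sub i0 Y) (capmxSr M C).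
  have [t1 Ht1] : exists t, v0 0 t != 0.
    apply: NNPP => H; move/eqP: Hi0; apply; apply/rowP => t; rewrite !mxE.
    apply: NNPP => ht; apply: H; exists t; apply/eqP; rewrite /v0 mxE; exact: ht.
  have [tm Htm] := argmax_ex t1 (fun t => `|v0 0 t|).
  have m0 : 0 < `|v0 0 tm| by apply: lt_le_trans (Htm t1); rewrite normr_gt0.
  pose w := (`|v0 0 tm|)^-1 *: v0.
  have rw : (\row_t w 0 t) = w by apply/rowP=> t; rewrite mxE.
  exists (fun t => w 0 t); split.
  + move=> t; rewrite mxE normrM normfV normr_id ler_pdivrMl // mulr1; exact: Htm.
  + by exists tm; rewrite mxE normrM normfV normr_id mulVf // gt_eqF.
  + by rewrite rw; apply: scalemx_sub.
  + exists b; split=> //; rewrite rw.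
    exact: (lin_submx ((Ei_lin X k j).2 b Xb) EM (scalemx_sub _ v0M)).
- by move=> e v [].
pose vr := \row_t vs t.
have vrC : (vr <= C)%MS.
  rewrite submxE; apply/eqP/rowP => jj; rewrite rowfun_mul [RHS]mxE.
  apply: (@lin_closed 'I_N vs (fun t => cokermx C t jj)) => e e0.
  have [v [[_ _ vC _] hv]] := Hvs e e0; exists v; split => //.
  by move: vC; rewrite submxE => /eqP /rowP /(_ jj); rewrite rowfun_mul mxE.
have vrF : E j.+1 a (fromRow vr).
  rewrite Ei_S; apply: closure_sub_rho => //; first exact: Ei_lin.
  move=> e e0; have [v [[_ _ _ [b [Xb hb Eb]]] hv]] := Hvs e e0.
  exists b, (fromRow (\row_t v t)); split => // m; rewrite /fromRow !mxE; exact: hv.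
have vrB := spB _ vrF; rewrite toRowK in vrB.
have : (vr <= B :&: C)%MS by rewrite sub_capmx vrB vrC.
rewrite capmx_compl submx0 => /eqP vr0.
have h2 : (0 : R) < 1/2 by lra.
have [v [[_ [tm htm] _ _] hv]] := Hvs (1/2) h2.
have := hv tm; have -> : vs tm = 0 by have := congr1 (fun M : 'rV[R]_N => M 0 tm) vr0; rewrite !mxE.
move=> h; rewrite sub0r normrN htm in h.
have h3 : (1 / 2 : R) < 1 by lra.
by have := lt_trans h h3; rewrite ltxx.
Qed.

End LemmaL.
End P4.

Section P5.
Context (R : realType) (n : nat) (X : pt R n -> Prop) (k : nat).
Local Notation N := (rdim n k).
Local Notation E j := (@Ei R n X k j).

Definition Sg j a := X a /\ ~ (forall z, E j.+1 a z -> E j a z).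

Lemma Sg_closure j a : Sg j.+1 a -> forall e : R, 0 < e ->
  exists b, [/\ X b, forall i, `|a i - b i| < e & Sg j b].
Proof.
move=> [Xa nS] e e0; apply: NNPP => H; apply: nS => z.
rewrite !Ei_S; apply: (rho_local e0) => b Xb hb z' Ez'.
apply: NNPP => nE; apply: H; exists b; split=> //; split=> // Hb.
by apply: nE; apply: Hb.
Qed.

Lemma Sg_closure2 j a : Sg j.+2 a -> forall e : R, 0 < e ->
  exists b, [/\ X b, forall i, `|a i - b i| < e & Sg j b].
Proof.
move=> Sa e e0.
have e20 : 0 < e / 2 by rewrite divr_gt0.
have [b [Xb hb Sb]] := Sg_closure Sa e20.
have [c [Xc hc Sc]] := Sg_closure Sb e20.
exists c; split=> // i.
have := hb i; have := hc i; have := ler_normD (a i - b i) (b i - c i).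
rewrite addrA subrK => h1 h2 h3.
apply: (le_lt_trans h1); rewrite [e](splitr e); exact: ltrD.
Qed.

Lemma indep0 (S : dual R n k -> Prop) : indep S 0.
Proof.
exists 0; split; last by case.
by rewrite /row_free; apply/eqP/eqP; rewrite -leqn0 rank_leq_row.
Qed.

Lemma Sg_grow j b c : Sg j b -> indep_ge (E j b) c -> indep_ge (E j.+1 b) c.+1.
Proof.
move=> [Xb nS] [c' [cc' [M [fM EM]]]].
have [z [Ez nEz]] : exists z, E j.+1 b z /\ ~ E j b z.
  apply: NNPP => H; apply: nS => z Ez; apply: NNPP => nE; apply: H; by exists z.
exists c'.+1; split=> //.
apply: (indep_grow (z := z) fM) => //.
- by move=> i; apply: Ei_incr.
- apply/negP => zM; apply: nEz; rewrite -(fromRowK z).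
  exact: (lin_submx ((Ei_lin X k j).2 b Xb) EM zM).
Qed.

Lemma Sg_indep m : forall a, Sg (2 * m) a -> indep_ge (E (2 * m) a) m.
Proof.
elim: m => [|m IH] a Sa.
  by exists 0%N; split=> //; apply: indep0.
have e2 : (2 * m.+1 = (2 * m).+2)%N by lia.
rewrite e2 in Sa *.
have Xa : X a by case: Sa.
apply: lemmaL => // e e0.
have [b [Xb hb Sb]] := Sg_closure2 Sa e0.
exists b; split=> //; apply: Sg_grow => //; exact: IH.
Qed.

Lemma stable a : X a -> forall z, E (2 * N).+1 a z -> E (2 * N) a z.
Proof.
move=> Xa; apply: NNPP => H.
have Sa : Sg (2 * N) a by split.
have [c' [cc' ind]] := Sg_grow Sa (Sg_indep Sa).
have := indep_bound ind; lia.
Qed.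

Lemma tau_closed a z : X a ->
  (forall e : R, 0 < e -> exists a' z', [/\ @tau R n X k a' z', forall i, `|a i - a' i| < e & forall m, `|z m - z' m| < e]) ->
  @tau R n X k a z.
Proof.
move=> Xa H; apply: (stable Xa).
rewrite Ei_S; apply: closure_sub_rho => //; exact: Ei_lin.
Qed.

Lemma tau_lin : lin_bundle X (tau X (k:=k)).
Proof. exact: (Ei_lin X k (2 * N)). Qed.

End P5.

Section Cont.
Context (R : realType) (P : Type) (near : R -> P -> Prop) (p0 : P).
Hypothesis near_mon : forall d d' p, 0 < d -> d <= d' -> near d p -> near d' p.

Definition contat (f : P -> R) :=
  forall e, 0 < e -> exists2 d, 0 < d & forall p, near d p -> `|f p0 - f p| < e.

Lemma cont_const c : contat (fun _ => c).
Proof. by move=> e e0; exists 1 => // p _; rewrite subrr normr0. Qed.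

Lemma cont_ext f g : contat f -> (forall p, f p = g p) -> contat g.
Proof.
move=> cf fg e e0; have [d d0 H] := cf e e0; exists d => // p np.
by rewrite -!fg; apply: H.
Qed.

Lemma min_pos (a b : R) : 0 < a -> 0 < b -> 0 < Num.min a b.
Proof. by move=> a0 b0; rewrite lt_min a0 b0. Qed.

Lemma minl (a b : R) : Num.min a b <= a. Proof. by rewrite ge_min lexx. Qed.
Lemma minr (a b : R) : Num.min a b <= b. Proof. by rewrite ge_min lexx orbT. Qed.

Lemma cont_add f g : contat f -> contat g -> contat (fun p => f p + g p).
Proof.
move=> cf cg e e0.
have e20 : 0 < e / 2 by rewrite divr_gt0.
have [d1 d10 H1] := cf _ e20; have [d2 d20 H2] := cg _ e20.
exists (Num.min d1 d2); first exact: min_pos.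
move=> p np.
have h1 := H1 p (near_mon (min_pos d10 d20) (minl _ _) np).
have h2 := H2 p (near_mon (min_pos d10 d20) (minr _ _) np).
have -> : f p0 + g p0 - (f p + g p) = (f p0 - f p) + (g p0 - g p) by rewrite opprD addrACA.
apply: (le_lt_trans (ler_normD _ _)); rewrite [e](splitr e); exact: ltrD.
Qed.

Lemma cont_mul f g : contat f -> contat g -> contat (fun p => f p * g p).
Proof.
move=> cf cg e e0.
pose Mf := `|f p0| + 1; pose Mg := `|g p0| + 2.
have Mf0 : 0 < Mf by rewrite /Mf ltr_pwDr.
have Mg0 : 0 < Mg by rewrite /Mg ltr_pwDr.
pose u := e / (2 * Mf); pose v := e / (2 * Mg).
have u0 : 0 < u by rewrite divr_gt0 // mulr_gt0.
have v0 : 0 < v by rewrite divr_gt0 // mulr_gt0.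
have uM : u * Mf = e / 2 by rewrite /u; field; rewrite gt_eqF.
have vM : v * Mg = e / 2 by rewrite /v; field; rewrite gt_eqF.
have u10 : 0 < Num.min 1 u by apply: min_pos.
have [d1 d10 H1] := cf _ v0; have [d2 d20 H2] := cg _ u10.
exists (Num.min d1 d2); first exact: min_pos.
move=> p np.
have h1 := H1 p (near_mon (min_pos d10 d20) (minl _ _) np).
have h2 := H2 p (near_mon (min_pos d10 d20) (minr _ _) np).
have h21 : `|g p0 - g p| < 1 by apply: lt_le_trans h2 (minl _ _).
have h2u : `|g p0 - g p| < u by apply: lt_le_trans h2 (minr _ _).
have -> : f p0 * g p0 - f p * g p = f p0 * (g p0 - g p) + (f p0 - f p) * g p.
  by rewrite mulrBr mulrBl addrA subrK.
apply: (le_lt_trans (ler_normD _ _)); rewrite !normrM.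
have hgp : `|g p| <= Mg.
  have : `|g p| <= `|g p0| + `|g p0 - g p|.
    by have := ler_normD (g p0) (g p - g p0); rewrite addrCA subrr addr0 (distrC (g p)).
  rewrite /Mg; lra.
have hf0 : `|f p0| <= Mf by rewrite /Mf; lra.
have n1 := normr_ge0 (f p0); have n2 := normr_ge0 (g p0 - g p).
have n3 := normr_ge0 (f p0 - f p); have n4 := normr_ge0 (g p).
have a1 : `|f p0| * `|g p0 - g p| <= Mf * u.
  by apply: ler_pM => //; apply: ltW.
have a2 : `|f p0 - f p| * `|g p| < v * Mg.
  by apply: (le_lt_trans (ler_wpM2l n3 hgp)); rewrite ltr_pM2r.
lra.
Qed.

Lemma cont_sum (I : Type) (s : seq I) (Pr : pred I) (F : I -> P -> R) :
  (forall i, contat (F i)) -> contat (fun p => \sum_(i <- s | Pr i) F i p).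
Proof.
move=> cF; elim: s => [|i s IH].
  by apply: cont_ext (cont_const 0) _ => p; rewrite big_nil.
apply: (@cont_ext (fun p => (if Pr i then F i p else 0) + \sum_(j <- s | Pr j) F j p)).
  by apply: cont_add => //; case: (Pr i) => //; exact: cont_const.
by move=> p; rewrite big_cons; case: (Pr i); rewrite ?add0r.
Qed.

Lemma cont_unif (I : finType) (F : I -> P -> R) : (forall i, contat (F i)) ->
  forall e, 0 < e -> exists2 d, 0 < d & forall p, near d p -> forall i, `|F i p0 - F i p| < e.
Proof.
move=> cF e e0.
suff H : forall s : seq I, exists2 d, 0 < d & forall p, near d p -> forall i, i \in s -> `|F i p0 - F i p| < e.
  have [d d0 Hd] := H (enum I); exists d => // p np i; apply: Hd => //; by rewrite mem_enum.
elim=> [|i s [d d0 IH]]; first by exists 1.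
have [di di0 Hi] := cF i e e0.
exists (Num.min d di); first exact: min_pos.
move=> p np j; rewrite in_cons; case/orP => [/eqP ->|js].
  exact: Hi p (near_mon (min_pos d0 di0) (minr _ _) np).
exact: IH p (near_mon (min_pos d0 di0) (minl _ _) np) j js.
Qed.

Section ContPoly.
Context (n : nat).
Definition contP (F : P -> {mpoly R[n]}) := forall m, contat (fun p => (F p)@_m).

Lemma contP_ext F G : contP F -> (forall p, F p = G p) -> contP G.
Proof. by move=> cF FG m; apply: cont_ext (cF m) _ => p; rewrite FG. Qed.

Lemma contP_const c : contP (fun _ => c).
Proof. by move=> m; apply: cont_const. Qed.

Lemma contP_add F G : contP F -> contP G -> contP (fun p => F p + G p).
Proof. by move=> cF cG m; apply: cont_ext (cont_add (cF m) (cG m)) _ => p; rewrite mcoeffD. Qed.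

Lemma contP_mul F G : contP F -> contP G -> contP (fun p => F p * G p).
Proof.
move=> cF cG m; apply: cont_ext (cont_sum _ _ _) _.
  2: by move=> p; rewrite mcoeffM.
by move=> kk /=; apply: cont_mul.
Qed.

Lemma contP_scale f F : contat f -> contP F -> contP (fun p => f p *: F p).
Proof. by move=> cf cF m; apply: cont_ext (cont_mul cf (cF m)) _ => p; rewrite mcoeffZ. Qed.

Lemma contP_C f : contat f -> contP (fun p => (f p)%:MP).
Proof. by move=> cf m; apply: cont_ext (cont_mul cf (cont_const _)) _ => p; rewrite mcoeffC. Qed.

Lemma contP_sum (I : Type) (s : seq I) (Pr : pred I) (F : I -> P -> {mpoly R[n]}) :
  (forall i, contP (F i)) -> contP (fun p => \sum_(i <- s | Pr i) F i p).
Proof.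
move=> cF; elim: s => [|i s IH].
  by apply: contP_ext (contP_const 0) _ => p; rewrite big_nil.
apply: (@contP_ext (fun p => (if Pr i then F i p else 0) + \sum_(j <- s | Pr j) F j p)).
  by apply: contP_add => //; case: (Pr i) => //; exact: contP_const.
by move=> p; rewrite big_cons; case: (Pr i); rewrite ?add0r.
Qed.

Lemma contP_prod (I : Type) (s : seq I) (Pr : pred I) (F : I -> P -> {mpoly R[n]}) :
  (forall i, contP (F i)) -> contP (fun p => \prod_(i <- s | Pr i) F i p).
Proof.
move=> cF; elim: s => [|i s IH].
  by apply: contP_ext (contP_const 1) _ => p; rewrite big_nil.
apply: (@contP_ext (fun p => (if Pr i then F i p else 1) * \prod_(j <- s | Pr j) F j p)).
  by apply: contP_mul => //; case: (Pr i) => //; exact: contP_const.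
by move=> p; rewrite big_cons; case: (Pr i); rewrite ?mul1r.
Qed.

Lemma contP_exp F e : contP F -> contP (fun p => F p ^+ e).
Proof.
move=> cF; elim: e => [|e IH].
  by apply: contP_ext (contP_const 1) _ => p; rewrite expr0.
by apply: contP_ext (contP_mul cF IH) _ => p; rewrite exprS.
Qed.

Lemma contP_comp (k : nat) (Q : {mpoly R[k]}) (T : P -> k.-tuple {mpoly R[n]}) :
  (forall i, contP (fun p => tnth (T p) i)) -> contP (fun p => Q \mPo T p).
Proof.
move=> cT; apply: contP_ext (contP_sum _ _ _) _.
  2: by move=> p; rewrite comp_mpolyEX.
move=> m /=; apply: contP_scale; first exact: cont_const.
apply: contP_ext (contP_prod _ _ _) _.
  2: by move=> p; rewrite comp_mpolyX.
by move=> i /=; apply: contP_exp.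
Qed.

End ContPoly.

End Cont.

Section P7.
Context (R : realType) (n p q : nat).
Local Notation PT := (pt R n * dual R n p)%type.

Definition nearp (p0 : PT) (d : R) (pr : PT) :=
  (forall i, `|p0.1 i - pr.1 i| < d) /\ (forall m, `|p0.2 m - pr.2 m| < d).

Lemma nearp_mon p0 d d' pr : 0 < d -> d <= d' -> nearp p0 d pr -> nearp p0 d' pr.
Proof.
move=> _ dd [h1 h2]; split=> [i|m]; [exact: lt_le_trans (h1 i) dd | exact: lt_le_trans (h2 m) dd].
Qed.

Lemma cont_a p0 i : contat (nearp p0) p0 (fun pr => pr.1 i).
Proof. by move=> e e0; exists e => // pr [h _]. Qed.

Lemma cont_xi p0 m : contat (nearp p0) p0 (fun pr => pr.2 m).
Proof. by move=> e e0; exists e => // pr [_ h]. Qed.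

Lemma cont_pi p0 (P : {mpoly R[n]}) : contP (nearp p0) p0 (fun pr => pi_a p pr.1 P).
Proof.
have hm := @nearp_mon p0.
rewrite /pi_a.
apply: (contP_ext (F := fun pr => \sum_(m : midx n p)
   (P \mPo [tuple ('X_i + (pr.1 i)%:MP) | i < n])@_(val m) *:
   ('X_[val m] \mPo [tuple ('X_i - (pr.1 i)%:MP) | i < n]))).
  apply: contP_sum => // m; apply: contP_scale => //.
    have : contP (nearp p0) p0 (fun pr : PT => P \mPo [tuple ('X_i + (pr.1 i)%:MP) | i < n]).
      apply: contP_comp => // i.
      apply: (contP_ext (F := fun pr : PT => 'X_i + (pr.1 i)%:MP)).
        apply: contP_add => //; first exact: contP_const.
        by apply: contP_C => //; apply: cont_a.
      by move=> pr; rewrite tnth_mktuple.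
    by move/(_ (val m)).
  apply: contP_comp => // i.
  apply: (contP_ext (F := fun pr : PT => 'X_i + (- pr.1 i)%:MP)).
    apply: contP_add => //; first exact: contP_const.
    apply: contP_C => //; apply: (cont_ext (f := fun pr : PT => (-1) * pr.1 i)).
      by apply: cont_mul => //; [apply: cont_const | apply: cont_a].
    by move=> pr; rewrite mulN1r.
  by move=> pr; rewrite tnth_mktuple mpolyCN.
move=> pr /=; rewrite raddf_sum; apply: eq_bigr => m _.
by symmetry; exact: comp_mpolyZ.
Qed.

Lemma cont_iota p0 (m : midx n q) : contat (nearp p0) p0 (fun pr => @iota_a R n p q pr.1 pr.2 m).
Proof.
have hm := @nearp_mon p0.
rewrite /iota_a /dapp; apply: cont_sum => // mm.
apply: cont_mul => //; last exact: cont_xi.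
exact: cont_pi.
Qed.

Lemma iota0 a : @iota_a R n p q a (fun _ => 0) = (fun _ => 0).
Proof. by apply: functional_extensionality => m; rewrite /iota_a /dapp big1 // => i _; rewrite mulr0. Qed.

Lemma iotaD a x y : @iota_a R n p q a (fun m => x m + y m) = (fun m => @iota_a R n p q a x m + @iota_a R n p q a y m).
Proof.
apply: functional_extensionality => m; rewrite /iota_a /dapp -big_split.
by apply: eq_bigr => i _; rewrite mulrDr.
Qed.

Lemma iotaZ a c x : @iota_a R n p q a (fun m => c * x m) = (fun m => c * @iota_a R n p q a x m).
Proof.
apply: functional_extensionality => m; rewrite /iota_a /dapp mulr_sumr.
by apply: eq_bigr => i _; rewrite mulrCA.
Qed.

End P7.

Unset Implicit Arguments.
Local Close Scope ring_scope.

Theorem lemma2p2 (R : realType) (n : nat) (X : pt R n -> Prop) (p q : nat) :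
  closed_set X -> (p <= q)%N -> closed_subbundle X (@tau_p R n X p q).
Proof.
move=> cX pq; split.
- by move=> a xi [].
- move=> a Xa; have [T0 TD TZ] := (tau_lin X q).2 a Xa.
  split.
  + by split=> //; rewrite iota0.
  + by move=> x y [_ Tx] [_ Ty]; split=> //; rewrite iotaD; apply: TD.
  + by move=> c x [_ Tx]; split=> //; rewrite iotaZ; apply: TZ.
- move=> a xi Xa H; split=> //.
  apply: tau_closed => // e e0.
  have hm := @nearp_mon R n p (a, xi).
  have [d d0 Hd] := cont_unif hm (fun m => @cont_iota R n p q (a, xi) m) e0.
  have [a' [xi' [[_ Ta'] ha hxi]]] := H _ (min_pos d0 e0).
  exists a', (@iota_a R n p q a' xi'); split=> //.
  + by move=> i; apply: lt_le_trans (ha i) (minr _ _).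
  + move=> m; apply: (Hd (a', xi')).
    by split=> /= [i|mm]; [apply: lt_le_trans (ha i) (minl _ _) | apply: lt_le_trans (hxi mm) (minl _ _)].
Qed.
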